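(* For every $p>1$, the function $t\mapsto\dot H_e(t/p)/\dot H_e(t)$ is increasing on $(0,\ln2)$.
   Context: $\dot H_e(t)=te^{-t}-(1-e^{-t})\ln(1-e^{-t})$ for $t>0$. *)

(* Defs.v *)
From Stdlib Require Import Reals.
Open Scope R_scope.

Definition Hdot_e (t : R) : R :=
  t * exp (- t) - (1 - exp (- t)) * ln (1 - exp (- t)).

(* Main.v *)
Require Import Defs.
From Stdlib Require Import Reals Lra.
From Coquelicot Require Import Coquelicot.
Open Scope R_scope.
Definition Hd t := exp (-t) * (-t - ln (1 - exp (-t))).

Lemma basic t : 0 < t -> t < ln 2 ->
  / 2 < exp (-t) < 1 /\ 0 < - t - ln (1 - exp (-t)).
Proof.
  intros H0 H1.
  assert (Ha : exp (-t) < 1).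
  { rewrite <- exp_0. apply exp_increasing. lra. }
  assert (Hb : / 2 < exp (-t)).
  { replace (/2) with (exp (- ln 2)).
    apply exp_increasing. lra.
    rewrite exp_Ropp, exp_ln; lra. }
  split. lra.
  assert (ln (1 - exp (-t)) < ln (exp (-t))).
  { apply ln_increasing; lra. }
  rewrite ln_exp in H. lra.
Qed.

Lemma der_H t : 0 < t -> is_derive Hdot_e t (Hd t).
Proof.
  intros H0.
  assert (exp (-t) < 1).
  { rewrite <- exp_0. apply exp_increasing. lra. }
  unfold Hdot_e, Hd. auto_derive.
  - lra.
  - unfold Rminus. field. lra.
Qed.
Definition fd t := Hd t - t * Hd t - t * exp (-t) / (1 - exp (-t)).
Definition ff t := t * Hd t.
Definition q t := fd t / Hd t.

Lemma der_f t : 0 < t -> is_derive ff t (fd t).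
Proof.
  intros H0.
  assert (exp (-t) < 1).
  { rewrite <- exp_0. apply exp_increasing. lra. }
  unfold ff, fd, Hd. auto_derive.
  - lra.
  - unfold Rminus. field. lra.
Qed.

Lemma Hd_pos t : 0 < t -> t < ln 2 -> 0 < Hd t.
Proof. intros; destruct (basic t) as [[? ?] ?]; auto. unfold Hd.
  apply Rmult_lt_0_compat; lra. Qed.

Lemma H_pos t : 0 < t -> t < ln 2 -> 0 < Hdot_e t.
Proof. intros; destruct (basic t) as [[? ?] ?]; auto. unfold Hdot_e.
  assert (ln (1 - exp (-t)) < 0). { rewrite <- ln_1. apply ln_increasing; lra. }
  assert (0 < t * exp (-t)) by (apply Rmult_lt_0_compat; lra).
  assert (0 < (1 - exp (-t)) * - ln (1 - exp (-t))) by (apply Rmult_lt_0_compat; lra).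
  lra. Qed.

Lemma q_formula t : 0 < t -> t < ln 2 ->
  q t = 1 - t - (t / (1 - exp (-t))) * / (- t - ln (1 - exp (-t))).
Proof. intros; destruct (basic t) as [[? ?] ?]; auto.
  unfold q, fd, Hd. field. lra. Qed.
Definition g1 t := t / (1 - exp (-t)).
Lemma g1_incr s t : 0 < s -> s < t -> g1 s < g1 t.
Proof.
  intros Hs Hst.
  apply (incr_function g1 0 p_infty (fun t => ((1 - exp (-t)) - t * exp (-t)) / (1 - exp (-t))^2)); simpl; auto; try lra.
  - intros x Hx _.
    assert (exp (-x) < 1).
    { rewrite <- exp_0. apply exp_increasing. lra. }
    unfold g1. auto_derive. lra. field. lra.
  - intros x Hx _.
    assert (exp (-x) < 1).
    { rewrite <- exp_0. apply exp_increasing. lra. }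
    assert (1 + x < exp x) by (apply exp_ineq1; lra).
    assert (exp (-x) * exp x = 1) by (rewrite <- exp_plus; replace (-x + x) with 0 by ring; apply exp_0).
    assert (0 < exp (-x)) by apply exp_pos.
    apply Rdiv_lt_0_compat; nra.
Qed.

Lemma q_decr s t : 0 < s -> s < t -> t < ln 2 -> q t < q s.
Proof.
  intros Hs Hst Ht.
  rewrite (q_formula s), (q_formula t) by lra.
  destruct (basic s) as [[? ?] ?]; try lra.
  destruct (basic t) as [[? ?] ?]; try lra.
  assert (exp (-t) < exp (-s)) by (apply exp_increasing; lra).
  assert (ln (1 - exp (-s)) < ln (1 - exp (-t))) by (apply ln_increasing; lra).
  pose proof (g1_incr s t Hs Hst). unfold g1 in H7.
  set (a := s / (1 - exp (-s))) in *.
  set (b := t / (1 - exp (-t))) in *.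
  set (cs := - s - ln (1 - exp (-s))) in *.
  set (ct := - t - ln (1 - exp (-t))) in *.
  assert (0 < a) by (unfold a; apply Rdiv_lt_0_compat; lra).
  assert (ct < cs) by (unfold ct, cs; lra).
  assert (a * / cs < b * / ct).
  { apply Rlt_le_trans with (b * / cs).
    apply Rmult_lt_compat_r. apply Rinv_0_lt_compat; lra. lra.
    apply Rmult_le_compat_l. lra. apply Rlt_le, Rinv_lt_contravar. nra. lra. }
  lra.
Qed.
Lemma ln_lt_self z : 0 < z -> ln z < z.
Proof. intros. rewrite <- (ln_exp z) at 2. apply ln_increasing. auto.
  pose proof (exp_ineq1_le z). lra. Qed.

Lemma wlnw w : 0 < w < 1 -> w * - ln w < 2 * sqrt w.
Proof.
  intros Hw. set (r := sqrt w).
  assert (Hr : r * r = w) by (apply sqrt_sqrt; lra).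
  assert (0 < r). { unfold r. apply sqrt_lt_R0. lra. }
  assert (ln w = 2 * ln r).
  { rewrite <- Hr, ln_mult by lra. ring. }
  assert (ln (/ r) < / r) by (apply ln_lt_self; apply Rinv_0_lt_compat; lra).
  rewrite ln_Rinv in H1 by lra.
  rewrite H0, <- Hr.
  assert (r * r * / r = r) by (field; lra).
  nra.
Qed.

Lemma H_small d u : 0 < d -> 0 < u -> exists e, 0 < e < u /\ Hdot_e e < d.
Proof.
  intros Hd Hu.
  set (e := Rmin (u/2) (Rmin (d/4) ((d/4)*(d/4)))).
  assert (e <= u/2) by apply Rmin_l.
  assert (e <= d/4) by (eapply Rle_trans; [apply Rmin_r|apply Rmin_l]).
  assert (e <= (d/4)*(d/4)) by (eapply Rle_trans; [apply Rmin_r|apply Rmin_r]).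
  assert (0 < e). { unfold e. repeat apply Rmin_glb_lt; try nra. }
  exists e. split. lra.
  assert (exp (-e) < 1). { rewrite <- exp_0. apply exp_increasing. lra. }
  assert (0 < exp (-e)) by apply exp_pos.
  pose proof (exp_ineq1_le (-e)).
  pose proof (wlnw (1 - exp (-e))).
  assert (sqrt (1 - exp (-e)) <= sqrt ((d/4)*(d/4))) by (apply sqrt_le_1_alt; lra).
  rewrite sqrt_square in H7 by lra.
  unfold Hdot_e.
  assert (e * exp (-e) < e) by nra.
  assert (- ((1 - exp (-e)) * ln (1 - exp (-e))) < 2 * sqrt (1 - exp (-e))).
  { replace (- ((1 - exp (-e)) * ln (1 - exp (-e)))) with ((1 - exp (-e)) * - ln (1 - exp (-e))) by ring.
    apply H6. lra. }
  lra.
Qed.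
Lemma cont_of_der (f : R -> R) x l : is_derive f x l -> continuity_pt f x.
Proof. intros H. apply continuity_pt_filterlim. apply (ex_derive_continuous f).
  exists l. exact H. Qed.

Lemma psi_mvt a b k : 0 < a -> a < b -> b < ln 2 ->
  exists c, a <= c <= b /\
   (ff b - k * Hdot_e b) - (ff a - k * Hdot_e a) = Hd c * (q c - k) * (b - a).
Proof.
  intros Ha Hab Hb.
  destruct (MVT_gen (fun x => ff x - k * Hdot_e x) a b (fun x => fd x - k * Hd x)) as [c [Hc E]].
  - intros x Hx. rewrite Rmin_left, Rmax_right in Hx by lra.
    apply (is_derive_minus (fun x => ff x) (fun x => k * Hdot_e x)).
    apply der_f; lra. apply is_derive_scal. apply der_H; lra.
  - intros x Hx. rewrite Rmin_left, Rmax_right in Hx by lra.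
    apply (cont_of_der _ _ (fd x - k * Hd x)).
    apply (is_derive_minus (fun x => ff x) (fun x => k * Hdot_e x)).
    apply der_f; lra. apply is_derive_scal. apply der_H; lra.
  - rewrite Rmin_left, Rmax_right in Hc by lra.
    exists c. split. auto. rewrite E.
    pose proof (Hd_pos c). unfold q. field. lra.
Qed.
Lemma ff_pos t : 0 < t -> t < ln 2 -> 0 < ff t.
Proof. intros. unfold ff. pose proof (Hd_pos t). apply Rmult_lt_0_compat; auto. Qed.

Lemma H_incr s t : 0 < s -> s < t -> t < ln 2 -> Hdot_e s < Hdot_e t.
Proof.
  intros. apply (incr_function Hdot_e 0 (ln 2) Hd); simpl; auto.
  - intros. apply der_H. auto.
  - intros. apply Hd_pos; auto.
Qed.

Lemma nonstrict m : 0 < m -> m < ln 2 -> q m * Hdot_e m <= ff m.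
Proof.
  intros Hm Hm2.
  destruct (Rle_or_lt (q m) 0) as [Hq|Hq].
  { pose proof (H_pos m Hm Hm2). pose proof (ff_pos m Hm Hm2). nra. }
  apply Rnot_lt_le. intro Hc.
  destruct (H_small ((q m * Hdot_e m - ff m) / q m) m) as [e [He HHe]]; auto.
  { apply Rdiv_lt_0_compat; lra. }
  destruct (psi_mvt e m (q m)) as [c [Hc' E]]; try lra.
  assert (q m <= q c).
  { destruct (Rle_lt_or_eq_dec c m) as [h|h]; try lra.
    apply Rlt_le, q_decr; lra. subst; lra. }
  assert (0 <= Hd c * (q c - q m) * (m - e)).
  { pose proof (Hd_pos c). apply Rmult_le_pos. apply Rmult_le_pos; lra. lra. }
  pose proof (ff_pos e). 
  assert (Hdot_e e * q m < q m * Hdot_e m - ff m).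
  { apply (Rmult_lt_compat_r (q m)) in HHe; auto.
    unfold Rdiv in HHe. rewrite Rmult_assoc, Rinv_l in HHe by lra. lra. }
  assert (0 < ff e) by (apply ff_pos; lra).
  lra.
Qed.

Lemma strict u : 0 < u -> u < ln 2 -> q u * Hdot_e u < ff u.
Proof.
  intros Hu Hu2.
  pose proof (nonstrict (u/2)) as N.
  destruct (psi_mvt (u/2) u (q u)) as [c [Hc' E]]; try lra.
  assert (q u <= q c).
  { destruct (Rle_lt_or_eq_dec c u) as [h|h]; try lra.
    apply Rlt_le, q_decr; lra. subst; lra. }
  assert (0 <= Hd c * (q c - q u) * (u - u/2)).
  { pose proof (Hd_pos c). apply Rmult_le_pos. apply Rmult_le_pos; lra. lra. }
  assert (q u < q (u/2)) by (apply q_decr; lra).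
  pose proof (H_pos (u/2)).
  assert (q u * Hdot_e (u/2) < q (u/2) * Hdot_e (u/2)) by (apply Rmult_lt_compat_r; lra).
  lra.
Qed.

Lemma E_decr u t : 0 < u -> u < t -> t < ln 2 ->
  ff t * Hdot_e u < ff u * Hdot_e t.
Proof.
  intros Hu Hut Ht.
  destruct (psi_mvt u t (q u)) as [c [Hc' E]]; try lra.
  assert (q c <= q u).
  { destruct (Rle_lt_or_eq_dec u c) as [h|h]; try lra.
    apply Rlt_le, q_decr; lra. subst; lra. }
  assert (Hd c * (q c - q u) * (t - u) <= 0).
  { pose proof (Hd_pos c). assert (0 <= Hd c * (q u - q c) * (t - u)).
    apply Rmult_le_pos. apply Rmult_le_pos; lra. lra. lra. }
  pose proof (strict u Hu).
  pose proof (H_incr u t). pose proof (H_pos u).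
  assert (q u * (Hdot_e t - Hdot_e u) * Hdot_e u < ff u * (Hdot_e t - Hdot_e u)).
  { rewrite Rmult_assoc, (Rmult_comm _ (Hdot_e u)), <- Rmult_assoc.
    apply Rmult_lt_compat_r; lra. }
  nra.
Qed.
Theorem mainTheorem18 (p : R) (hp : 1 < p) :
  forall s t : R, 0 < s -> s < t -> t < ln 2 ->
    Hdot_e (s / p) / Hdot_e s < Hdot_e (t / p) / Hdot_e t.
Proof.
  intros s t Hs Hst Ht.
  apply (incr_function (fun x => Hdot_e (x / p) / Hdot_e x) 0 (ln 2)
    (fun x => ((/ p * Hd (x / p)) * Hdot_e x - Hdot_e (x / p) * Hd x) / Hdot_e x ^ 2)); try (simpl; lra).
  - intros x Hx Hx2. simpl in Hx, Hx2.
    assert (0 < x / p) by (apply Rdiv_lt_0_compat; lra).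
    apply (is_derive_div (fun x => Hdot_e (x / p)) Hdot_e x).
    + apply (is_derive_comp Hdot_e (fun x => x / p) x (Hd (x/p)) (/ p)).
      apply der_H; auto.
      auto_derive. auto. field. lra.
    + apply der_H; auto.
    + pose proof (H_pos x Hx Hx2). lra.
  - intros x Hx Hx2. simpl in Hx, Hx2.
    assert (0 < x / p) by (apply Rdiv_lt_0_compat; lra).
    assert (x / p < x).
    { apply Rmult_lt_reg_r with p. lra. unfold Rdiv. rewrite Rmult_assoc, Rinv_l by lra. nra. }
    pose proof (E_decr (x / p) x H H0 Hx2).
    pose proof (H_pos x Hx Hx2).
    unfold ff in H1.
    assert (Hd x * Hdot_e (x / p) < / p * Hd (x / p) * Hdot_e x).
    { apply Rmult_lt_reg_l with x. lra.
      replace (x * (/ p * Hd (x / p) * Hdot_e x)) with (x / p * Hd (x / p) * Hdot_e x) by (field; lra).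
      lra. }
    apply Rdiv_lt_0_compat. lra. apply pow_lt. lra.
Qed.
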